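(* Let $(a_n)_{\mathrm c}\in\widetilde{\mathbb C}_{\mathrm c}$ and $c\in\widetilde{\mathbb C}$. (i) If $z\in S((a_n)_{\mathrm c},c)$ (i.e. $\sum_{n\in\widetilde{\mathbb N}}a_n(z-c)^n$ is a convergent hyperpower series), then there exists $K\in\widetilde{\mathbb N}$ such that $|a_n(z-c)^n|<K$ for all $n\in\widetilde{\mathbb N}$, where $a_n(z-c)^n$ denotes the $n$-th term of the formal hyperpower series $(a_n(z-c)^n)_n\in\widetilde{\mathbb C}_{\mathrm s}$. (ii) For all representatives $(a_n)_{\mathrm c}=[a_{n\varepsilon}]_{\mathrm c}$ and $c=[c_\varepsilon]$ there exists $\delta\in\widetilde{\mathbb R}_{>0}$ such that for every $z=[z_\varepsilon]\in B_\delta(c)$ there is $K=[K_\varepsilon]\in\widetilde{\mathbb R}_{>0}$ with: for all sufficiently small $\varepsilon$ and all $n\in\mathbb N$, $|a_{n\varepsilon}(z_\varepsilon-c_\varepsilon)^n|<K_\varepsilon$.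
   Context: Fix $I=(0,1]$ and a gauge $\rho=(\rho_\varepsilon)_{\varepsilon\in I}$ with $\rho_\varepsilon\in I$ and $\rho_\varepsilon\to0$ as $\varepsilon\to0$. ''$\forall^0\varepsilon$'' means ''for all sufficiently small $\varepsilon\in I$''. A net $(x_\varepsilon)\in\mathbb C^I$ is $\rho$-moderate ($(x_\varepsilon)\in\mathbb C_\rho$) if $\exists N\in\mathbb N\,\forall^0\varepsilon:|x_\varepsilon|\le\rho_\varepsilon^{-N}$, and $\rho$-negligible if $\forall q\in\mathbb N\,\forall^0\varepsilon:|x_\varepsilon|\le\rho_\varepsilon^q$. $\widetilde{\mathbb C}:=\mathbb C_\rho/\{\text{negligible nets}\}$ with classes $[x_\varepsilon]$; $\widetilde{\mathbb R}\subseteq\widetilde{\mathbb C}$ consists of classes of real moderate nets; $\mathrm d\rho:=[\rho_\varepsilon]$, $|[z_\varepsilon]|:=[|z_\varepsilon|]$. On $\widetilde{\mathbb R}$: $[x_\varepsilon]\le[y_\varepsilon]$ iff $x_\varepsilon\le y_\varepsilon+z_\varepsilon$ $\forall^0\varepsilon$ for some negligible $(z_\varepsilon)$; $x<y$ iff $\exists m\,\forall^0\varepsilon:y_\varepsilon-x_\varepsilon>\rho_\varepsilon^m$; $\widetilde{\mathbb R}_{>0}:=\{x:x>0\}$. $B_r(c):=\{z\in\widetilde{\mathbb C}:|z-c|<r\}$ for $r\in\widetilde{\mathbb R}_{>0}$. Hypernatural numbers: $\widetilde{\mathbb N}:=\{[n_\varepsilon]\in\widetilde{\mathbb R}:n_\varepsilon\in\mathbb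 N\ \forall\varepsilon\}$; for each $N\in\widetilde{\mathbb N}$ a representative $(\mathrm{ni}(N)_\varepsilon)$ with all $\mathrm{ni}(N)_\varepsilon\in\mathbb N$ is fixed. Hyperlimit: $l=\lim_{n\in\widetilde{\mathbb N}}a_n$ means $\forall q\,\exists M\in\widetilde{\mathbb N}\,\forall n\in\widetilde{\mathbb N}:n\ge M\Rightarrow|a_n-l|<\mathrm d\rho^q$. Hyperseries: a net $(a_{n\varepsilon})_{n\in\mathbb N,\varepsilon\in I}$ is moderate over hypersums if for every $N\in\widetilde{\mathbb N}$ the net $(\sum_{n=0}^{\mathrm{ni}(N)_\varepsilon}a_{n\varepsilon})_\varepsilon$ is $\rho$-moderate; two such nets are equivalent if for all $N,M\in\widetilde{\mathbb N}$ the net $(\sum_{n=\mathrm{ni}(N)_\varepsilon}^{\mathrm{ni}(M)_\varepsilon}(a_{n\varepsilon}-\bar a_{n\varepsilon}))_\varepsilon$ is negligible; the quotient is $\widetilde{\mathbb C}_{\mathrm s}$ with classes $(b_n)_n=[b_{n\varepsilon}]_{\mathrm s}$, and $b_N:=[b_{\mathrm{ni}(N)_\varepsilon,\varepsilon}]$ for $N\in\widetilde{\mathbb N}$ (well defined). $\sum_{n=N}^Mb_n:=[\sum_{n=\mathrm{ni}(N)_\varepsilon}^{\mathrm{ni}(M)_\varepsilon}b_{n\varepsilon}]$, and $\sum_{n\in\widetilde{\mathbb N}}b_n:=\lim_{N\in\widetilde{\mathbb N}}\sum_{n=0}^Nb_n$ when this hyperlimit exists. Coefficients: $\widetilde{\mathbb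 C}_{\mathrm c}$ is the set of weakly $\rho$-moderate nets $(a_{n\varepsilon})$ ($\exists Q,R\in\mathbb N\,\forall^0\varepsilon\,\forall n\in\mathbb N:|a_{n\varepsilon}|\le\rho_\varepsilon^{-nQ-R}$) modulo strong equivalence ($\forall q,r\,\forall^0\varepsilon\,\forall n:|a_{n\varepsilon}-\bar a_{n\varepsilon}|\le\rho_\varepsilon^{nq+r}$), classes $(a_n)_{\mathrm c}=[a_{n\varepsilon}]_{\mathrm c}$. $\widetilde{\mathbb R}_\infty:=(\mathbb R\cup\{\pm\infty\})^I/\sim_\rho$, and for $x\in\widetilde{\mathbb R}$, $y\in\widetilde{\mathbb R}_\infty$, $x<y$ iff $\exists m\,\forall^0\varepsilon:y_\varepsilon>x_\varepsilon+\rho_\varepsilon^m$. Radius: $\mathrm{rad}(a_n)_{\mathrm c}:=[(\limsup_n|a_{n\varepsilon}|^{1/n})^{-1}]\in\widetilde{\mathbb R}_\infty$. Set of convergence: $S((a_n)_{\mathrm c},c)$ is the set of $z\in\widetilde{\mathbb C}$ with $|z-c|<\mathrm{rad}(a_n)_{\mathrm c}$ for which there exist representatives $z=[z_\varepsilon]$, $c=[c_\varepsilon]$, $(a_n)_{\mathrm c}=[a_{n\varepsilon}]_{\mathrm c}$ such that: (a) the net $(a_{n\varepsilon}(z_\varepsilon-c_\varepsilon)^n)_{n,\varepsilon}$ is moderate over hypersums (its class $(a_n(z-c)^n)_n\in\widetilde{\mathbb C}_{\mathrm s}$ is the formal hyperpower series, independent of representatives); (b) the hyperseries $\sum_{n\in\widetilde{\mathbb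 N}}a_n(z-c)^n$ converges and equals $[\sum_{n=0}^{\infty}a_{n\varepsilon}(z_\varepsilon-c_\varepsilon)^n]$; (c) for every representative $z=[\hat z_\varepsilon]$, the net $(\sum_{n\ge1}na_{n\varepsilon}(\hat z_\varepsilon-c_\varepsilon)^{n-1})_\varepsilon$ is $\rho$-moderate. *)

(* Defs.v *)
From Stdlib Require Import Reals.
From Coquelicot Require Import Coquelicot.
Open Scope R_scope.

(* Nets indexed by I = (0,1] are represented as functions R -> X; only the
   values at eps in (0,1] matter (all notions below only look at small eps). *)

Definition small_eps (P : R -> Prop) : Prop :=
  exists e0 : R, 0 < e0 /\ forall e : R, 0 < e -> e < e0 -> P e.

Record gauge := Gauge {
  rho : R -> R;
  rho_in : forall e, 0 < e <= 1 -> 0 < rho e <= 1;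
  rho_to0 : forall eta, 0 < eta ->
     exists e0, 0 < e0 /\ forall e, 0 < e <= 1 -> e < e0 -> rho e < eta
}.

Section Colombeau.
Variable g : gauge.
Local Notation rh := (rho g).

Definition moderateR (x : R -> R) : Prop :=
  exists N : nat, small_eps (fun e => Rabs (x e) <= / (rh e ^ N)).
Definition negligibleR (x : R -> R) : Prop :=
  forall q : nat, small_eps (fun e => Rabs (x e) <= rh e ^ q).

Definition moderateC (x : R -> C) : Prop := moderateR (fun e => Cmod (x e)).
Definition negligibleC (x : R -> C) : Prop := negligibleR (fun e => Cmod (x e)).
Definition equivC (x y : R -> C) : Prop := negligibleC (fun e => Cminus (x e) (y e)).

Definition leR (x y : R -> R) : Prop :=
  exists z : R -> R, negligibleR z /\ small_eps (fun e => x e <= y e + z e).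
Definition ltR (x y : R -> R) : Prop :=
  exists m : nat, small_eps (fun e => y e - x e > rh e ^ m).

(* Hypernatural numbers: representatives with values in nat; since two
   nat-valued representatives of the same class agree for small eps,
   quantifying over all nat-valued moderate nets is the same as quantifying
   over the fixed representatives ni(N). *)
Definition hypernat (n : R -> nat) : Prop := moderateR (fun e => INR (n e)).

Definition hyperlimit (A : (R -> nat) -> R -> C) (l : R -> C) : Prop :=
  forall q : nat, exists M : R -> nat, hypernat M /\
    forall N : R -> nat, hypernat N ->
      leR (fun e => INR (M e)) (fun e => INR (N e)) ->
      ltR (fun e => Cmod (Cminus (A N e) (l e))) (fun e => rh e ^ q).

Definition hsum (b : nat -> R -> C) (N : R -> nat) : R -> C :=
  fun e => sum_n_m (fun n => b n e) 0 (N e).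

Definition mod_hypersums (b : nat -> R -> C) : Prop :=
  forall N : R -> nat, hypernat N -> moderateC (hsum b N).

Definition weakly_moderate (a : nat -> R -> C) : Prop :=
  exists Q Rr : nat, small_eps (fun e => forall n : nat,
     Cmod (a n e) <= / (rh e ^ (n * Q + Rr))).
Definition strong_equiv (a a' : nat -> R -> C) : Prop :=
  forall q r : nat, small_eps (fun e => forall n : nat,
     Cmod (Cminus (a n e) (a' n e)) <= rh e ^ (n * q + r)).

(* radius of convergence: rad_eps = (limsup_n |a_{n eps}|^(1/n))^(-1) in R u {+-oo} *)
Definition nroot (x : R) (n : nat) : R :=
  match Req_EM_T x 0 with left _ => 0 | right _ => Rpower x (/ INR n) end.
Definition Rbar_inv' (x : Rbar) : Rbar :=
  match x with
  | Finite r => match Req_EM_T r 0 with left _ => p_infty | right _ => Finite (/ r) end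
  | p_infty => Finite 0
  | m_infty => Finite 0   (* never occurs: limsup of nonnegative terms *)
  end.
Definition rad (a : nat -> R -> C) : R -> Rbar :=
  fun e => Rbar_inv' (LimSup_seq (fun n => nroot (Cmod (a n e)) n)).
Definition ltR_inf (x : R -> R) (y : R -> Rbar) : Prop :=
  exists m : nat, small_eps (fun e => Rbar_lt (Finite (x e + rh e ^ m)) (y e)).

Definition hps_net (a : nat -> R -> C) (c z : R -> C) : nat -> R -> C :=
  fun n e => Cmult (a n e) (pow_n (Cminus (z e) (c e)) n).
(* the net  n a_{n eps} (z_eps - c_eps)^(n-1), n >= 1 (term n = 0 is 0) *)
Definition deriv_net (a : nat -> R -> C) (c z : R -> C) : nat -> R -> C :=
  fun n e => Cmult (RtoC (INR n)) (Cmult (a n e) (pow_n (Cminus (z e) (c e)) (pred n))).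

Definition in_conv_set (a : nat -> R -> C) (c z : R -> C) : Prop :=
  exists (a' : nat -> R -> C) (c' z' : R -> C),
    weakly_moderate a' /\ strong_equiv a a' /\
    moderateC c' /\ equivC c c' /\ moderateC z' /\ equivC z z' /\
    ltR_inf (fun e => Cmod (Cminus (z' e) (c' e))) (rad a') /\
    mod_hypersums (hps_net a' c' z') /\
    (exists s : R -> C,
       small_eps (fun e => is_series (fun n => hps_net a' c' z' n e) (s e)) /\
       moderateC s /\
       hyperlimit (hsum (hps_net a' c' z')) s) /\
    (forall zh : R -> C, moderateC zh -> equivC z' zh ->
       exists s : R -> C,
         small_eps (fun e => is_series (fun n => deriv_net a' c' zh n e) (s e)) /\
         moderateC s).

End Colombeau.

(* Main.v *)
Require Import Defs.
From Stdlib Require Import Reals Lra Lia ZArith Arith.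
From Coquelicot Require Import Coquelicot.
Open Scope R_scope.


Lemma small_and (P Q : R -> Prop) : small_eps P -> small_eps Q -> small_eps (fun e => P e /\ Q e).
Proof.
  intros [a [Ha HP]] [b [Hb HQ]]. exists (Rmin a b). split.
  - apply Rmin_glb_lt; lra.
  - intros e He1 He2. pose proof (Rmin_l a b). pose proof (Rmin_r a b).
    split; [apply HP|apply HQ]; lra.
Qed.

Lemma small_impl (P Q : R -> Prop) : small_eps P -> (forall e, P e -> Q e) -> small_eps Q.
Proof. intros [a [Ha HP]] H. exists a. split; auto. Qed.

Lemma small_rho g eta : 0 < eta -> small_eps (fun e => 0 < rho g e /\ rho g e <= 1 /\ rho g e < eta).
Proof.
  intros Heta. destruct (rho_to0 g eta Heta) as [e0 [He0 H]].
  exists (Rmin e0 1). split. apply Rmin_glb_lt; lra.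
  intros e He1 He2. pose proof (Rmin_l e0 1). pose proof (Rmin_r e0 1).
  destruct (rho_in g e) as [Hr1 Hr2]; [lra|]. repeat split; auto. apply H; lra.
Qed.

Lemma pow_le_mono (r : R) (a b : nat) : 0 < r <= 1 -> (a <= b)%nat -> r ^ b <= r ^ a.
Proof.
  intros Hr Hab. induction Hab. lra.
  simpl. apply Rle_trans with (r ^ m); auto.
  assert (0 < r ^ m) by (apply pow_lt; lra). nra.
Qed.

Lemma inv_pow_mono (r : R) (a b : nat) : 0 < r <= 1 -> (a <= b)%nat -> / r ^ a <= / r ^ b.
Proof.
  intros Hr Hab. apply Rinv_le_contravar. apply pow_lt; lra. apply pow_le_mono; auto.
Qed.

Lemma inv_pow_ge1 (r : R) (a : nat) : 0 < r <= 1 -> 1 <= / r ^ a.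
Proof.
  intros Hr. replace 1 with (/ r ^ 0) by (simpl; field). apply inv_pow_mono; auto. lia.
Qed.

Lemma moderate_le g (x y : R -> R) : moderateR g y -> small_eps (fun e => Rabs (x e) <= Rabs (y e)) -> moderateR g x.
Proof.
  intros [N HN] H. exists N. eapply small_impl. apply small_and; [exact HN|exact H].
  intros e [H1 H2]. lra.
Qed.

Lemma moderate_add g (x y : R -> R) : moderateR g x -> moderateR g y -> moderateR g (fun e => Rabs (x e) + Rabs (y e)).
Proof.
  intros [N1 H1] [N2 H2]. exists (S (N1 + N2)).
  eapply small_impl. apply small_and; [apply small_and; [exact H1|exact H2]|apply (small_rho g (1/2)); lra].
  intros e [[A B] [C [D F]]].
  assert (/ rho g e ^ N1 <= / rho g e ^ (N1 + N2)) by (apply inv_pow_mono; [lra|lia]).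
  assert (/ rho g e ^ N2 <= / rho g e ^ (N1 + N2)) by (apply inv_pow_mono; [lra|lia]).
  assert (0 < / rho g e ^ (N1 + N2)) by (apply Rinv_0_lt_compat, pow_lt; lra).
  assert (Hi : / rho g e ^ S (N1 + N2) = / rho g e * / rho g e ^ (N1 + N2)).
  { simpl. rewrite Rinv_mult. reflexivity. }
  assert (2 <= / rho g e).
  { replace 2 with (/ (1/2)) by field. apply Rinv_le_contravar; lra. }
  rewrite Rabs_pos_eq by (apply Rplus_le_le_0_compat; apply Rabs_pos).
  rewrite Hi. nra.
Qed.

Lemma moderate_const g (c : R) : moderateR g (fun _ => c).
Proof.
  exists 1%nat. eapply small_impl. apply (small_rho g (/ (Rabs c + 1))).
  apply Rinv_0_lt_compat. pose proof (Rabs_pos c). lra.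
  intros e [A [B C]]. simpl. rewrite Rmult_1_r.
  assert (Rabs c + 1 < / rho g e).
  { pose proof (Rabs_pos c).
    assert (H1 : rho g e * (Rabs c + 1) < 1).
    { assert (H1 : rho g e * (Rabs c + 1) < / (Rabs c + 1) * (Rabs c + 1))
        by (apply Rmult_lt_compat_r; lra).
      rewrite Rinv_l in H1 by lra. exact H1. }
    assert (H2 : Rabs c + 1 = rho g e * (Rabs c + 1) * / rho g e) by (field; lra).
    assert (0 < / rho g e) by (apply Rinv_0_lt_compat; lra). nra. }
  lra.
Qed.

Lemma moderate_invpow g (k : nat) : moderateR g (fun e => / rho g e ^ k).
Proof.
  exists k. eapply small_impl. apply (small_rho g 1); lra.
  intros e [A [B C]]. rewrite Rabs_pos_eq. lra. left. apply Rinv_0_lt_compat, pow_lt; lra.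
Qed.

Lemma hypernat_le g (N M : R -> nat) : hypernat g M -> (forall e, (N e <= M e)%nat) -> hypernat g N.
Proof.
  intros HM H. unfold hypernat. eapply moderate_le. exact HM.
  exists 1. split. lra. intros e _ _. rewrite !Rabs_pos_eq by apply pos_INR. apply le_INR; auto.
Qed.

Lemma moderate_lin g (x y : R -> R) : moderateR g x -> moderateR g y -> moderateR g (fun e => x e + y e).
Proof.
  intros Hx Hy. eapply moderate_le. apply (moderate_add g _ _ Hx Hy).
  exists 1. split. lra. intros e _ _.
  rewrite (Rabs_pos_eq (Rabs (x e) + Rabs (y e))) by (apply Rplus_le_le_0_compat; apply Rabs_pos).
  apply Rabs_triang.
Qed.

Lemma hypernat_plus g (N M : R -> nat) : hypernat g N -> hypernat g M -> hypernat g (fun e => N e + M e)%nat.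
Proof.
  intros HN HM. unfold hypernat. eapply moderate_le. apply (moderate_lin g _ _ HN HM).
  exists 1. split. lra. intros e _ _. rewrite plus_INR. lra.
Qed.

Lemma hypernat_const g (k : nat) : hypernat g (fun _ => k).
Proof. exact (moderate_const g (INR k)). Qed.

Lemma neg0 g : negligibleR g (fun _ => 0).
Proof.
  intros q. eapply small_impl. apply (small_rho g 1); lra. intros e [A _].
  rewrite Rabs_R0. apply pow_le; lra.
Qed.

Fixpoint argmax (f : nat -> R) (m : nat) : nat :=
  match m with
  | O => O
  | S m' => let k := argmax f m' in
            if Rle_dec (f k) (f (S m')) then S m' else k
  end.

Lemma argmax_spec f m : (argmax f m <= m)%nat /\ forall n, (n <= m)%nat -> f n <= f (argmax f m).
Proof.
  induction m as [|m [IH1 IH2]]; simpl.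
  - split. lia. intros n Hn. replace n with 0%nat by lia. lra.
  - destruct (Rle_dec (f (argmax f m)) (f (S m))) as [H|H].
    + split. lia. intros n Hn. destruct (Nat.eq_dec n (S m)). subst; lra.
      specialize (IH2 n ltac:(lia)). lra.
    + split. lia. intros n Hn. destruct (Nat.eq_dec n (S m)). subst; lra.
      apply IH2; lia.
Qed.

Definition natceil (x : R) : nat := Z.to_nat (up x).

Lemma natceil_spec x : 0 <= x -> x < INR (natceil x) <= x + 1.
Proof.
  intros Hx. destruct (archimed x) as [H1 H2]. unfold natceil.
  assert (0 <= up x)%Z. { apply le_IZR. simpl. lra. }
  rewrite INR_IZR_INZ, Z2Nat.id by auto. lra.
Qed.

Lemma cmod_pow (x : C) n : Cmod (pow_n x n) = Cmod x ^ n.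
Proof. induction n; simpl. apply Cmod_1. change (mult x (pow_n x n)) with (Cmult x (pow_n x n)). rewrite Cmod_mult, IHn. ring. Qed.

Lemma cmod_hps a c z n e : Cmod (hps_net a c z n e) = Cmod (a n e) * Cmod (Cminus (z e) (c e)) ^ n.
Proof. unfold hps_net. rewrite Cmod_mult, cmod_pow. reflexivity. Qed.

Lemma pow_split (r : R) (n Q R0 : nat) : 0 < r -> / r ^ (n * Q + R0) * (r ^ Q) ^ n = / r ^ R0.
Proof.
  intros Hr. rewrite pow_add, <- pow_mult, Nat.mul_comm.
  assert (0 < r ^ (Q * n)) by (apply pow_lt; lra).
  assert (0 < r ^ R0) by (apply pow_lt; lra). field. lra.
Qed.

Lemma part2 g a c (Ha : weakly_moderate g a) :
  (exists delta : R -> R, moderateR g delta /\ ltR g (fun _ => 0) delta /\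
     forall z : R -> C, moderateC g z ->
       ltR g (fun e => Cmod (Cminus (z e) (c e))) delta ->
       exists K : R -> R, moderateR g K /\ ltR g (fun _ => 0) K /\
         small_eps (fun e => forall n : nat,
           Cmod (hps_net a c z n e) < K e)).
Proof.
  destruct Ha as [Q [R0 HQ]].
  exists (fun e => rho g e ^ Q). split; [|split].
  - eapply moderate_le. apply (moderate_const g 1).
    eapply small_impl. apply (small_rho g 1); lra. intros e [A [B C]].
    rewrite !Rabs_pos_eq by (try apply pow_le; lra).
    pose proof (pow_le_mono (rho g e) 0 Q (conj A B) ltac:(lia)). simpl in *; lra.
  - exists (S Q). eapply small_impl. apply (small_rho g 1); lra. intros e [A [B C]].
    simpl. assert (0 < rho g e ^ Q) by (apply pow_lt; lra). nra.
  - intros z _ [m Hm]. exists (fun e => / rho g e ^ R0 + 1). split; [|split].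
    + eapply moderate_le. apply (moderate_add g _ _ (moderate_invpow g R0) (moderate_const g 1)).
      eapply small_impl. apply (small_rho g 1); lra. intros e [A [B C]].
      assert (0 < / rho g e ^ R0) by (apply Rinv_0_lt_compat, pow_lt; lra).
      rewrite (Rabs_pos_eq (/ _)), (Rabs_pos_eq 1), Rabs_pos_eq; lra.
    + exists 0%nat. eapply small_impl. apply (small_rho g 1); lra. intros e [A [B C]].
      assert (0 < / rho g e ^ R0) by (apply Rinv_0_lt_compat, pow_lt; lra). simpl. lra.
    + eapply small_impl. apply small_and; [exact HQ|apply small_and; [exact Hm|apply (small_rho g 1); lra]].
      intros e [H1 [H2 [A [B C]]]] n. rewrite cmod_hps.
      assert (0 < rho g e ^ m) by (apply pow_lt; lra).
      set (w := Cmod (Cminus (z e) (c e))) in *.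
      assert (Hw : 0 <= w) by apply Cmod_ge_0.
      assert (w ^ n <= (rho g e ^ Q) ^ n) by (apply pow_incr; lra).
      assert (0 <= w ^ n) by (apply pow_le; lra).
      specialize (H1 n). rewrite <- (pow_split (rho g e) n Q R0) by lra.
      assert (0 < / rho g e ^ (n * Q + R0)) by (apply Rinv_0_lt_compat, pow_lt; lra).
      pose proof (Cmod_ge_0 (a n e)).
      assert (Cmod (a n e) * w ^ n <= / rho g e ^ (n * Q + R0) * (rho g e ^ Q) ^ n).
      { apply Rmult_le_compat; auto. }
      lra.
Qed.

Lemma exp_pow_n x n : exp x ^ n = exp (INR n * x).
Proof. induction n. simpl. rewrite Rmult_0_l, exp_0. reflexivity.
  rewrite S_INR. simpl. rewrite IHn, <- exp_plus. f_equal. ring. Qed.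

Lemma exp_le x y : x <= y -> exp x <= exp y.
Proof. intros [H|H]. left; apply exp_increasing; auto. subst; lra. Qed.

Lemma pow_split' (r : R) (n Q R0 : nat) : 0 < r -> / r ^ (n * Q + R0) * (r ^ Q) ^ n = / r ^ R0.
Proof.
  intros Hr. rewrite pow_add, <- pow_mult, Nat.mul_comm.
  assert (0 < r ^ (Q * n)) by (apply pow_lt; lra).
  assert (0 < r ^ R0) by (apply pow_lt; lra). field. lra.
Qed.

Lemma key (r ap app d x1 x2 : R) (n Q R0 j k : nat) :
  0 < r -> r <= 1/2 -> 0 <= app -> 0 <= d -> 0 <= x1 -> 0 <= x2 ->
  ap <= app + d -> d <= 2 * r ^ (n * k) -> x1 <= / r ^ k ->
  app <= / r ^ (n * Q + R0) -> x1 <= x2 + r ^ (Q + 1 + j) -> INR n <= / r ^ j ->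
  ap * x1 ^ n <= 3 * (app * x2 ^ n) + / r ^ R0 + 2.
Proof.
  intros Hr Hr2 Happ Hd Hx1 Hx2 Hap Hdd Hx1k Happ2 Hx12 Hn.
  assert (Hr1 : 0 < r <= 1) by lra.
  assert (Hx1n : 0 <= x1 ^ n) by (apply pow_le; lra).
  assert (Hx2n : 0 <= x2 ^ n) by (apply pow_le; lra).
  assert (HD : d * x1 ^ n <= 2).
  { assert (x1 ^ n <= (/ r ^ k) ^ n) by (apply pow_incr; lra).
    assert (Hrk : 0 < r ^ (n * k)) by (apply pow_lt; lra).
    assert ((/ r ^ k) ^ n = / r ^ (n * k)).
    { rewrite pow_inv, <- pow_mult, Nat.mul_comm. reflexivity. }
    apply Rle_trans with (2 * r ^ (n * k) * (/ r ^ k) ^ n).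
    apply Rmult_le_compat; auto.
    rewrite H0. field_simplify; lra. }
  assert (HA : app * x1 ^ n <= 3 * (app * x2 ^ n) + / r ^ R0).
  { assert (0 < / r ^ R0) by (apply Rinv_0_lt_compat, pow_lt; lra).
    assert (HrQ : 0 < r ^ Q) by (apply pow_lt; lra).
    assert (Hrj : 0 < r ^ j) by (apply pow_lt; lra).
    assert (HQ1 : r ^ (Q + 1 + j) = r ^ Q * r * r ^ j).
    { rewrite !pow_add. simpl. ring. }
    assert (r ^ j <= 1) by (pose proof (pow_le_mono r 0 j Hr1 ltac:(lia)); simpl in *; lra).
    destruct (Rle_or_lt x2 (r ^ Q * r)) as [Hc|Hc].
    - assert (x1 <= r ^ Q * (2 * r)) by nra.
      assert (x1 ^ n <= (r ^ Q * (2 * r)) ^ n) by (apply pow_incr; lra).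
      rewrite Rpow_mult_distr in H2.
      assert ((2 * r) ^ n <= 1) by (rewrite <- (pow1 n); apply pow_incr; lra).
      assert (0 <= (r ^ Q) ^ n) by (apply pow_le; lra).
      assert (app * x1 ^ n <= / r ^ (n * Q + R0) * ((r ^ Q) ^ n * (2 * r) ^ n)).
      { apply Rmult_le_compat; auto. }
      rewrite <- Rmult_assoc, pow_split' in H5 by lra.
      assert (0 <= app * x2 ^ n) by (apply Rmult_le_pos; auto). nra.
    - assert (0 < r ^ Q * r) by (apply Rmult_lt_0_compat; lra).
      set (t := r ^ (Q + 1 + j) / x2).
      assert (Ht : 0 <= t <= r ^ j).
      { unfold t. split. apply Rmult_le_pos. apply pow_le; lra. left; apply Rinv_0_lt_compat; lra.
        apply Rmult_le_reg_r with x2. lra. unfold Rdiv. rewrite Rmult_assoc, Rinv_l by lra. nra. }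
      assert (x1 <= x2 * (1 + t)).
      { unfold t. replace (x2 * (1 + r ^ (Q + 1 + j) / x2)) with (x2 + r ^ (Q + 1 + j)) by (field; lra). lra. }
      assert (Hp : x1 ^ n <= (x2 * exp t) ^ n).
      { apply pow_incr. split; auto. pose proof (exp_ineq1_le t). nra. }
      rewrite Rpow_mult_distr, exp_pow_n in Hp.
      assert (exp (INR n * t) <= 3).
      { apply Rle_trans with (exp 1); [|apply exp_le_3]. apply exp_le.
        pose proof (pos_INR n).
        apply Rle_trans with (/ r ^ j * r ^ j). apply Rmult_le_compat; lra.
        rewrite Rinv_l; lra. }
      assert (x1 ^ n <= x2 ^ n * 3) by (assert (0 <= exp (INR n * t)) by (left; apply exp_pos); nra).
      assert (app * x1 ^ n <= app * (x2 ^ n * 3)) by (apply Rmult_le_compat_l; auto). nra. }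
  assert (ap * x1 ^ n <= (app + d) * x1 ^ n) by (apply Rmult_le_compat_r; auto).
  nra.
Qed.

Lemma cmod_sub_le (x y : C) : Cmod (Cminus x y) <= Cmod x + Cmod y.
Proof. unfold Cminus. eapply Rle_trans. apply Cmod_triangle. rewrite Cmod_opp. lra. Qed.

Lemma cmod_tri3 (x y z : C) : Cmod (Cminus x z) <= Cmod (Cminus x y) + Cmod (Cminus z y).
Proof.
  replace (Cminus x z) with (Cminus (Cminus x y) (Cminus z y)) by (unfold Cminus; ring).
  apply cmod_sub_le.
Qed.

Lemma term_le_sums (b : nat -> C) n : Cmod (b n) <= Cmod (sum_n_m b 0 n) + Cmod (sum_n_m b 0 (pred n)).
Proof.
  destruct n as [|m]. simpl. rewrite sum_n_n. pose proof (Cmod_ge_0 (b 0%nat)). lra.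
  simpl. rewrite sum_n_Sm by lia.
  change (plus (sum_n_m b 0 m) (b (S m))) with (Cplus (sum_n_m b 0 m) (b (S m))).
  replace (b (S m)) with (Cminus (Cplus (sum_n_m b 0 m) (b (S m))) (sum_n_m b 0 m)) at 1 by (unfold Cminus; ring).
  apply cmod_sub_le.
Qed.

Lemma term_le_diff (b : nat -> C) s n : (1 <= n)%nat ->
  Cmod (b n) <= Cmod (Cminus (sum_n_m b 0 n) s) + Cmod (Cminus (sum_n_m b 0 (pred n)) s).
Proof.
  intros Hn. destruct n as [|m]. lia.
  simpl. rewrite sum_n_Sm by lia.
  change (plus (sum_n_m b 0 m) (b (S m))) with (Cplus (sum_n_m b 0 m) (b (S m))).
  replace (b (S m)) with (Cminus (Cplus (sum_n_m b 0 m) (b (S m))) (sum_n_m b 0 m)) at 1 by (unfold Cminus; ring).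
  apply cmod_tri3.
Qed.

Lemma cmod_w_diff (z z' z2 c c' c2 : C) :
  Cmod (Cminus (Cminus z' c') (Cminus z2 c2)) <=
  Cmod (Cminus z z') + Cmod (Cminus z z2) + Cmod (Cminus c c') + Cmod (Cminus c c2).
Proof.
  replace (Cminus (Cminus z' c') (Cminus z2 c2)) with
    (Cplus (Cminus (Cminus z z2) (Cminus z z')) (Cminus (Cminus c c') (Cminus c c2))) by (unfold Cminus; ring).
  eapply Rle_trans. apply Cmod_triangle.
  pose proof (cmod_sub_le (Cminus z z2) (Cminus z z')).
  pose proof (cmod_sub_le (Cminus c c') (Cminus c c2)). lra.
Qed.

Lemma part1 g (a : nat -> R -> C) (c : R -> C) :
  (forall z : R -> C, moderateC g z -> in_conv_set g a c z ->
     forall (a' : nat -> R -> C) (c' z' : R -> C),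
       weakly_moderate g a' -> strong_equiv g a a' ->
       moderateC g c' -> equivC g c c' -> moderateC g z' -> equivC g z z' ->
       mod_hypersums g (hps_net a' c' z') ->
       exists K : R -> nat, hypernat g K /\
         forall N : R -> nat, hypernat g N ->
           ltR g (fun e => Cmod (hps_net a' c' z' (N e) e)) (fun e => INR (K e))).
Proof.
  intros z Hz Hin a' c' z' Ha' Hsa' Hc' Hcc' Hz' Hzz' Hmh'.
  destruct Hin as (a2 & c2 & z2 & Ha2 & Hsa2 & Hc2 & Hcc2 & Hz2 & Hzz2 & _ & Hmh2 & (s & _ & _ & Hlim) & _).
  destruct Ha2 as (Q & R0 & HQ).
  set (b2 := hps_net a2 c2 z2).
  destruct (Hlim 0%nat) as (M & HM & HMl).
  set (Ns := fun e => argmax (fun n => Cmod (b2 n e)) (M e)).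
  assert (HNs : hypernat g Ns).
  { apply hypernat_le with M; auto. intros e. apply argmax_spec. }
  assert (HNsp : hypernat g (fun e => pred (Ns e))).
  { apply hypernat_le with Ns; auto. intros e. lia. }
  set (T := fun e => Cmod (b2 (Ns e) e)).
  assert (HT : moderateR g T).
  { eapply moderate_le. apply (moderate_add g _ _ (Hmh2 Ns HNs) (Hmh2 _ HNsp)).
    exists 1. split. lra. intros e _ _.
    rewrite (Rabs_pos_eq (T e)) by apply Cmod_ge_0.
    rewrite (Rabs_pos_eq (_ + _)) by (apply Rplus_le_le_0_compat; apply Rabs_pos).
    rewrite !Rabs_pos_eq by apply Cmod_ge_0.
    unfold T, hsum. apply (term_le_sums (fun n => b2 n e)). }
  assert (HW : moderateR g (fun e => Cmod (Cminus (z' e) (c' e)))).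
  { eapply moderate_le. apply (moderate_add g _ _ Hz' Hc').
    exists 1. split. lra. intros e _ _.
    rewrite (Rabs_pos_eq (_ + _)) by (apply Rplus_le_le_0_compat; apply Rabs_pos).
    rewrite !Rabs_pos_eq by apply Cmod_ge_0. apply cmod_sub_le. }
  destruct HW as [k Hk].
  set (X := fun e => 3 * T e + / rho g e ^ R0 + 10).
  exists (fun e => natceil (X e)). split.
  - unfold hypernat. eapply moderate_le.
    apply (moderate_lin g _ _ (moderate_lin g _ _ (moderate_lin g _ _ (moderate_lin g _ _ HT HT) HT)
             (moderate_invpow g R0)) (moderate_const g 11)).
    eapply small_impl. apply (small_rho g 1); lra. intros e [A [B _]].
    assert (0 <= T e) by apply Cmod_ge_0.
    assert (0 < / rho g e ^ R0) by (apply Rinv_0_lt_compat, pow_lt; lra).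
    pose proof (natceil_spec (X e)). unfold X in *.
    rewrite !Rabs_pos_eq by lra. lra.
  - intros N HN. pose proof HN as HN0. destruct HN0 as [j Hj].
    set (N1 := fun e => Nat.max (N e) (S (M e))).
    assert (HN1 : hypernat g N1).
    { apply hypernat_le with (fun e => N e + S (M e))%nat.
      apply hypernat_plus; auto. apply hypernat_plus with (N := fun _ => 1%nat); auto. apply hypernat_const.
      intros e. unfold N1. lia. }
    assert (HN1p : hypernat g (fun e => pred (N1 e))).
    { apply hypernat_le with N1; auto. intros e. lia. }
    destruct (HMl N1 HN1) as [m1 Hm1].
    { exists (fun _ => 0). split. apply neg0. exists 1. split. lra. intros e _ _.
      rewrite Rplus_0_r. apply le_INR. unfold N1. lia. }
    destruct (HMl _ HN1p) as [m2 Hm2].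
    { exists (fun _ => 0). split. apply neg0. exists 1. split. lra. intros e _ _.
      rewrite Rplus_0_r. apply le_INR. unfold N1. lia. }
    assert (SA : small_eps (fun e => Cmod (b2 (N e) e) <= T e + 2)).
    { eapply small_impl. apply small_and; [exact Hm1|apply small_and; [exact Hm2|apply (small_rho g 1); lra]].
      intros e [H1 [H2 [A [B _]]]].
      assert (0 < rho g e ^ m1) by (apply pow_lt; lra).
      assert (0 < rho g e ^ m2) by (apply pow_lt; lra).
      change (rho g e ^ 0) with 1 in H1, H2.
      destruct (le_lt_dec (N e) (M e)) as [Hle|Hlt].
      - assert (Cmod (b2 (N e) e) <= T e).
        { unfold T, Ns. apply (argmax_spec (fun n => Cmod (b2 n e)) (M e)). auto. }
        lra.
      - assert (HNe : N1 e = N e) by (unfold N1; lia).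
        unfold hsum in H1, H2. cbn beta in H1, H2. rewrite HNe in H1, H2. fold b2 in H1, H2.
        pose proof (term_le_diff (fun n => b2 n e) (s e) (N e) ltac:(lia)). simpl in H3.
        assert (0 <= T e) by apply Cmod_ge_0. lra. }
    exists 0%nat.
    set (p := (Q + 1 + j + 2)%nat).
    eapply small_impl.
    apply small_and; [exact SA|].
    apply small_and; [exact HQ|].
    apply small_and; [exact (Hsa' k 0%nat)|].
    apply small_and; [exact (Hsa2 k 0%nat)|].
    apply small_and; [exact (Hzz' p)|].
    apply small_and; [exact (Hzz2 p)|].
    apply small_and; [exact (Hcc' p)|].
    apply small_and; [exact (Hcc2 p)|].
    apply small_and; [exact Hk|].
    apply small_and; [exact Hj|].
    apply (small_rho g (1/2)); lra.
    intros e (H1 & H2 & H3 & H4 & H5 & H6 & H7 & H8 & H9 & H10 & A & B & Cc).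
    simpl.
    set (n := N e) in *.
    specialize (H2 n). specialize (H3 n). specialize (H4 n).
    rewrite Nat.add_0_r in H3, H4.
    rewrite Rabs_pos_eq in H5, H6, H7, H8, H9 by apply Cmod_ge_0.
    rewrite Rabs_pos_eq in H10 by apply pos_INR.
    rewrite cmod_hps.
    unfold b2 in H1. rewrite cmod_hps in H1.
    assert (Hd : Cmod (Cminus (a' n e) (a2 n e)) <= 2 * rho g e ^ (n * k)).
    { pose proof (cmod_tri3 (a' n e) (a n e) (a2 n e)).
      replace (Cminus (a' n e) (a n e)) with (Copp (Cminus (a n e) (a' n e))) in H by (unfold Cminus; ring).
      replace (Cminus (a2 n e) (a n e)) with (Copp (Cminus (a n e) (a2 n e))) in H by (unfold Cminus; ring).
      rewrite !Cmod_opp in H. lra. }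
    assert (Hap : Cmod (a' n e) <= Cmod (a2 n e) + Cmod (Cminus (a' n e) (a2 n e))).
    { replace (a' n e) with (Cplus (a2 n e) (Cminus (a' n e) (a2 n e))) at 1 by (unfold Cminus; ring).
      apply Cmod_triangle. }
    assert (Hx : Cmod (Cminus (z' e) (c' e)) <= Cmod (Cminus (z2 e) (c2 e)) + rho g e ^ (Q + 1 + j)).
    { pose proof (cmod_w_diff (z e) (z' e) (z2 e) (c e) (c' e) (c2 e)).
      pose proof (cmod_tri3 (Cminus (z' e) (c' e)) (Cminus (z2 e) (c2 e)) (Cminus (z2 e) (c2 e))).
      replace (Cminus (Cminus (z2 e) (c2 e)) (Cminus (z2 e) (c2 e))) with (RtoC 0) in H0 by (unfold Cminus; ring).
      rewrite Cmod_0 in H0.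
      assert (Hp : rho g e ^ p = rho g e ^ (Q + 1 + j) * (rho g e * rho g e)) by (unfold p; rewrite pow_add; simpl; ring).
      assert (0 < rho g e ^ (Q + 1 + j)) by (apply pow_lt; lra).
      assert (rho g e * rho g e <= 1/4) by nra.
      pose proof (Cmod_triangle (Cminus (Cminus (z' e) (c' e)) (Cminus (z2 e) (c2 e))) (Cminus (z2 e) (c2 e))).
      replace (Cplus (Cminus (Cminus (z' e) (c' e)) (Cminus (z2 e) (c2 e))) (Cminus (z2 e) (c2 e)))
        with (Cminus (z' e) (c' e)) in H13 by (unfold Cminus; ring).
      nra. }
    pose proof (key (rho g e) (Cmod (a' n e)) (Cmod (a2 n e)) (Cmod (Cminus (a' n e) (a2 n e)))
      (Cmod (Cminus (z' e) (c' e))) (Cmod (Cminus (z2 e) (c2 e))) n Q R0 j k A (Rlt_le _ _ Cc)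
      (Cmod_ge_0 _) (Cmod_ge_0 _) (Cmod_ge_0 _) (Cmod_ge_0 _) Hap Hd H9 H2 Hx H10).
    assert (0 <= T e) by apply Cmod_ge_0.
    assert (0 < / rho g e ^ R0) by (apply Rinv_0_lt_compat, pow_lt; lra).
    pose proof (natceil_spec (X e) ltac:(unfold X; lra)). unfold X in *.
    lra.
Qed.

Theorem lemma2p32 (g : gauge) (a : nat -> R -> C) (c : R -> C)
  (Ha : weakly_moderate g a) (Hc : moderateC g c) :
  (* (i) *)
  (forall z : R -> C, moderateC g z -> in_conv_set g a c z ->
     forall (a' : nat -> R -> C) (c' z' : R -> C),
       weakly_moderate g a' -> strong_equiv g a a' ->
       moderateC g c' -> equivC g c c' -> moderateC g z' -> equivC g z z' ->
       mod_hypersums g (hps_net a' c' z') ->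
       exists K : R -> nat, hypernat g K /\
         forall N : R -> nat, hypernat g N ->
           ltR g (fun e => Cmod (hps_net a' c' z' (N e) e)) (fun e => INR (K e)))
  /\
  (* (ii) *)
  (exists delta : R -> R, moderateR g delta /\ ltR g (fun _ => 0) delta /\
     forall z : R -> C, moderateC g z ->
       ltR g (fun e => Cmod (Cminus (z e) (c e))) delta ->
       exists K : R -> R, moderateR g K /\ ltR g (fun _ => 0) K /\
         small_eps (fun e => forall n : nat,
           Cmod (hps_net a c z n e) < K e)).
Proof.
  split. apply part1. apply part2. exact Ha.
Qed.
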